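(* Let $\alpha,\beta,p,n$ be positive integers with $p<\alpha\beta$ and $\beta\mid n$. Let $q=\lceil p/\beta\rceil$ and $r=p \bmod \beta\in\{1,\ldots,\beta\}$. Consider the code on cells $c_1,\ldots,c_n$, starting from the all-zero state, which on the $i$-th write ($i\ge1$) acts as follows: if $1\le i\bmod\alpha<q$, $n$ arbitrary information bits are written into all $n$ cells; if $i\bmod\alpha=q$, $rn/\beta$ arbitrary information bits are written into exactly the cells $c_j$ with $1\le j\bmod\beta\le r$, all other cells being left unchanged; if $i\bmod\alpha>q$, no information is written and no cell changes. Then this code is an $(\alpha,\beta,p)$-constrained code and its rate is $\frac{p}{\alpha\beta}$.
   Context: Convention: for positive integers $x,y$, $x \bmod y$ is taken in $\{1,\ldots,y\}$ (residue $0$ is represented by $y$). Memory cells are binary; there are $n$ cells and cell-state vectors lie in $\{0,1\}^n$. A code on $n$ cells consists, for each write $i\ge 1$, of a real $R_i\ge 0$, an encoder $\mathcal{E}_i:\{1,\ldots,\lfloor 2^{nR_i}\rfloor\}\times\{0,1\}^n\to\{0,1\}^n$ and a decoder $\mathcal{D}_i:\{0,1\}^n\to\{1,\ldots,\lfloor 2^{nR_i}\rfloor\}$ with $\mathcal{D}_i(\mathcal{E}_i(m,\mathbf{u}))=m$ (encoder and decoder may depend on $i$). Starting from $\mathbf{v}_0=\mathbf{0}$, messages $m_1,m_2,\ldots$ produce states $\mathbf{v}_i=\mathcal{E}_i(m_i,\mathbf{v}_{i-1})=(v_{i,1},\ldots,v_{i,n})$. The code is $(\alpha,\beta,p)$-constrained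 if for every message sequence, every $i\ge0$ and every $1\le j\le n-\beta+1$, $|\{(k,\ell): v_{i+k,j+\ell}\ne v_{i+k+1,j+\ell}, 0\le k<\alpha, 0\le\ell<\beta\}|\le p$. Its rate is $\lim_{m\to\infty}\frac1m\sum_{i=1}^m R_i$ (the number of information bits written per cell per write, averaged over writes). *)

(* Defs.v *)
From Stdlib Require Import Reals.
From mathcomp Require Import all_boot.

Set Implicit Arguments.
Unset Strict Implicit.
Unset Printing Implicit Defensive.

Definition modp (x y : nat) : nat := if x %% y == 0 then y else x %% y.

(* Cell-state vectors in {0,1}^n; cell c_j (1-indexed) is entry j-1. *)
Definition cstate (n : nat) := n.-tuple bool.
Definition cell (n : nat) (v : cstate n) (j0 : nat) : bool := nth false v j0.
Definition zero_state (n : nat) : cstate n := nseq_tuple n false.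

Definition nmsg (n : nat) (Ri : R) : nat := Z.to_nat (Int_part (Rpower 2 (INR n * Ri))).

(* Messages are natural numbers; only m in {1..nmsg} are meaningful. *)
Record code (n : nat) := Code {
  rate_of : nat -> R;
  enc : nat -> nat -> cstate n -> cstate n;
  dec : nat -> cstate n -> nat;
  rate_nonneg : forall i, 1 <= i -> Rle R0 (rate_of i);
  dec_range : forall i v, 1 <= i -> 1 <= dec i v <= nmsg n (rate_of i);
  dec_correct : forall i m u, 1 <= i -> 1 <= m <= nmsg n (rate_of i) ->
                dec i (enc i m u) = m
}.

Definition valid_msgs n (C : code n) (ms : nat -> nat) : Prop :=
  forall i, 1 <= i -> 1 <= ms i <= nmsg n (rate_of C i).

Fixpoint states n (C : code n) (ms : nat -> nat) (i : nat) : cstate n :=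
  match i with
  | 0 => zero_state n
  | i'.+1 => enc C i'.+1 (ms i'.+1) (states C ms i')
  end.

(* (alpha,beta,p)-constrained: for every message sequence, every i >= 0 and
   every window start j (1-indexed, 1 <= j <= n-beta+1; here j0 = j-1 with
   j0 + beta <= n), at most p of the alpha*beta (write, cell) pairs change. *)
Definition constrained n (C : code n) (alpha beta p : nat) : Prop :=
  forall ms, valid_msgs C ms ->
  forall i j0, j0 + beta <= n ->
    #|[pred kl : 'I_alpha * 'I_beta |
        cell (states C ms (i + kl.1)) (j0 + kl.2)
        != cell (states C ms (i + kl.1).+1) (j0 + kl.2)]| <= p.

Fixpoint rsum (f : nat -> R) (m : nat) : R :=
  match m with
  | 0 => R0
  | m'.+1 => Rplus (rsum f m') (f m'.+1)
  end.

Definition has_rate n (C : code n) (rho : R) : Prop :=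
  Un_cv (fun m => Rdiv (rsum (rate_of C) m) (INR m)) rho.

Definition thm3_q (beta p : nat) : nat := (p + beta - 1) %/ beta.
Definition thm3_r (beta p : nat) : nat := modp p beta.

Definition is_thm3_code n (C : code n) (alpha beta p : nat) : Prop :=
  let q := thm3_q beta p in
  let r := thm3_r beta p in
  forall i, 1 <= i ->
    (modp i alpha < q -> rate_of C i = R1) /\
    (modp i alpha = q ->
       rate_of C i = Rdiv (INR r) (INR beta) /\
       forall m u j0, j0 < n -> r < modp j0.+1 beta ->
         cell (enc C i m u) j0 = cell u j0) /\
    (q < modp i alpha -> rate_of C i = R0 /\ forall m u, enc C i m u = u).

(* Main.v *)
Require Import Defs.
From Stdlib Require Import Reals Lra.
From mathcomp Require Import all_boot zify.
Lemma card_inj_bound (T : finType) (P : pred T) (g : T -> nat) c :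
  {in P &, injective g} -> (forall x, P x -> g x < c) -> #|P| <= c.
Proof.
move=> inj hb.
rewrite cardE -(size_map g) -(size_iota 0 c).
apply: uniq_leq_size.
  rewrite map_inj_in_uniq ?enum_uniq //.
  by move=> x y; rewrite !mem_enum; apply: inj.
move=> z /mapP [x]; rewrite mem_enum => Px ->.
by rewrite mem_iota add0n hb.
Qed.
Lemma mod_inj a x y d : x < d -> y < d -> (a + x) %% d = (a + y) %% d -> x = y.
Proof.
move=> hx hy /eqP; rewrite eqn_modDl !modn_small //; by move/eqP.
Qed.
Lemma modpS x y : 0 < y -> modp x.+1 y = (x %% y).+1.
Proof.
move=> hy; have e : x.+1 %% y = ((x%%y).+1) %% y.
  by rewrite {1}(divn_eq x y) -addnS modnMDl.
have := ltn_pmod x hy.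
rewrite /modp e leq_eqVlt => /orP [/eqP ->|h].
  by rewrite modnn.
by rewrite modn_small.
Qed.
Lemma qr beta p : 0 < beta -> 0 < p ->
  [/\ 0 < thm3_q beta p, 0 < thm3_r beta p, thm3_r beta p <= beta &
     p = (thm3_q beta p).-1 * beta + thm3_r beta p].
Proof.
rewrite /thm3_q /thm3_r /modp => hb hp.
have e := divn_eq p beta. have lt := ltn_pmod p hb.
move: e lt. set a := p %/ beta. set b := p %% beta. move=> e lt.
case: eqP => h.
  have -> : p + beta - 1 = a * beta + beta.-1 by lia.
  rewrite divnMDl // divn_small ?addn0; last by lia.
  have : 0 < a by (case: a e => [|?]; lia).
  case: a e => [|a'] e _ //=; rewrite mulSn in e; split=> //; lia.
have -> : p + beta - 1 = a.+1 * beta + b.-1 by rewrite mulSn; lia.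
rewrite divnMDl // divn_small ?addn0; last by lia.
rewrite /=; split; lia.
Qed.

Lemma part1 (alpha beta p n : nat) (C : code n) :
  0 < alpha -> 0 < beta -> 0 < p ->
  is_thm3_code C alpha beta p -> constrained C alpha beta p.
Proof.
move=> ha hb hp HC.
have [hq hr hrb hpe] := @qr beta p hb hp.
set q := thm3_q beta p in hq hpe HC *. set r := thm3_r beta p in hr hrb hpe HC *.
move=> ms _ i j0 Hj.
set S := [pred kl : 'I_alpha * 'I_beta | _].
have key : forall kl, S kl -> ((i + kl.1) %% alpha).+1 < q \/
     (((i + kl.1) %% alpha).+1 = q /\ (j0 + kl.2) %% beta < r).
  case=> k l; rewrite /S /= => hS.
  have := HC (i + k).+1 isT; rewrite modpS // => -[H1 [H2 H3]].
  case: (ltngtP ((i + k) %% alpha).+1 q) => c; first by left.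
    have [_ Hid] := H3 c.
    move: hS; by rewrite /= Hid eqxx.
  right; split => //.
  rewrite ltnNge; apply/negP => c2.
  have [_ Hu] := H2 c.
  move: hS; rewrite /= Hu ?eqxx //.
    have := ltn_ord l; lia.
  rewrite modpS //.
pose g (kl : 'I_alpha * 'I_beta) :=
  if ((i + kl.1) %% alpha).+1 < q then ((i + kl.1) %% alpha) * beta + kl.2
  else q.-1 * beta + (j0 + kl.2) %% beta.
apply: (@card_inj_bound _ S g).
  case=> k l; case=> k' l' /key /= h1 /key /= h2; rewrite /g /=.
  have bl := ltn_ord l; have bl' := ltn_ord l'.
  have bk := ltn_ord k; have bk' := ltn_ord k'.
  have m1 := ltn_pmod (j0 + l) hb; have m2 := ltn_pmod (j0 + l') hb.
  case: h1 => [c1|[c1 d1]]; case: h2 => [c2|[c2 d2]];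
    rewrite ?c1 ?c2 ?ltnn //.
  - move=> e.
    have el : l = l' :> nat.
      by move: (congr1 (modn^~ beta) e); rewrite !modnMDl !modn_small.
    have : (i + k) %% alpha = (i + k') %% alpha.
      by rewrite el in e; apply/eqP; rewrite -(eqn_pmul2r hb); apply/eqP; lia.
    move/mod_inj => ek; congr (_, _); apply: val_inj => //; exact: ek.
  - nia.
  - nia.
  - move=> e; have el : l = l' :> nat by apply: (@mod_inj j0 _ _ beta) => //; lia.
    have ek : k = k' :> nat by apply: (@mod_inj i _ _ alpha) => //; lia.
    by congr (_, _); apply: val_inj.
case=> k l /key /= h; rewrite /g /=.
have bl := ltn_ord l.
case: h => [c1|[c1 d1]]; rewrite ?c1 ?ltnn; nia.
Qed.

Lemma rsum_ext f g m : (forall i, 1 <= i -> f i = g i) -> rsum f m = rsum g m.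
Proof. move=> h; elim: m => //= m ->; by rewrite h. Qed.




Open Scope R_scope.

Lemma rsum_shift (rho : nat -> R) a :
  (forall i, rho (i + a)%N = rho i) ->
  forall m, rsum rho (m + a)%N - rsum rho m = rsum rho a.
Proof.
move=> per; elim=> [|m IH]; first by rewrite add0n /=; lra.
rewrite addSn /= -addSn per. lra.
Qed.

Lemma rsum_bounds (rho : nat -> R) m :
  (forall i, 0 <= rho i <= 1) -> 0 <= rsum rho m <= INR m.
Proof.
move=> hb; elim: m => [|m IH]; first (simpl; lra).
change (rsum rho m.+1) with (rsum rho m + rho m.+1).
rewrite S_INR; have := hb m.+1; lra.
Qed.

Lemma rsum_first (rho : nat -> R) q c m : (0 < q)%N ->
  (forall i, (1 <= i <= m)%N -> rho i = if (i < q)%N then R1 else if i == q then c else R0) ->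
  rsum rho m = if (m < q)%N then INR m else (INR q.-1 + c).
Proof.
move=> hq; elim: m => [|m IH] h; first by rewrite hq.
change (rsum rho m.+1) with (rsum rho m + rho m.+1).
rewrite IH; last by move=> i hi; apply: h; lia.
rewrite h; last lia.
case: (ltngtP m.+1 q) => c1.
- rewrite S_INR; lra.
- lra.
- rewrite -c1 /=; lra.
Qed.

Lemma part2 (alpha beta p n : nat) (C : code n) :
  (0 < alpha)%N -> (0 < beta)%N -> (0 < p)%N -> (p < alpha * beta)%N ->
  is_thm3_code C alpha beta p ->
  has_rate C (Rdiv (INR p) (Rmult (INR alpha) (INR beta))).
Proof.
move=> ha hb hp hpab HC.
have [hq hr hrb hpe] := @qr beta p hb hp.
set q := thm3_q beta p in hq hpe HC *. set r := thm3_r beta p in hr hrb hpe HC *.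
have hqa : (q <= alpha)%N by nia.
have Bpos : 0 < INR beta by apply: lt_0_INR; apply/ltP.
have Apos : 0 < INR alpha by apply: lt_0_INR; apply/ltP.
pose rho i := if (modp i alpha < q)%N then R1 else if modp i alpha == q then INR r / INR beta else R0.
have Hrate : forall i, (1 <= i)%N -> rate_of C i = rho i.
  move=> i hi; have [H1 [H2 H3]] := HC i hi; rewrite /rho.
  case: (ltngtP (modp i alpha) q) => c.
  - exact: H1.
  - by have [-> _] := H3 c.
  - by have [-> _] := H2 c.
have per : forall i, rho (i + alpha)%N = rho i.
  by move=> i; rewrite /rho /modp modnDr.
have rb : forall i, 0 <= rho i <= 1.
  move=> i; rewrite /rho; case: ifP => _; first lra.
  case: ifP => _; last lra.
  have hy : 0 < / INR beta by apply: Rinv_0_lt_compat.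
  have hy1 : INR beta * / INR beta = 1 by field; lra.
  have hrr : INR r <= INR beta by apply: le_INR; apply/leP.
  have hr0 : 0 <= INR r by apply: pos_INR.
  rewrite /Rdiv; nra.
have first : rsum rho alpha = INR p / INR beta.
  rewrite (@rsum_first rho q (INR r / INR beta) alpha hq).
    have -> : (alpha < q)%N = false by lia.
    rewrite {1}hpe plus_INR mult_INR; field; lra.
  move=> i hi; rewrite /rho.
  have -> : modp i alpha = i.
    rewrite /modp; case: eqP => h.
      have : i = alpha by move: h; case: (ltngtP i alpha) => c; [rewrite modn_small; lia| lia| move=> _ ; lia].
      by [].
    rewrite modn_small //; move: h; case: (ltngtP i alpha) => c //; first lia.
    by rewrite c modnn.
  by [].
set L := INR p / (INR alpha * INR beta).
have DL : INR alpha * L = INR p / INR beta by rewrite /L; field; lra.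
have L01 : 0 <= L <= 1.
  have hp1 : INR p < INR alpha * INR beta.
    rewrite -mult_INR; apply: lt_INR; apply/ltP; exact: hpab.
  have hp0 : 0 <= INR p by apply: pos_INR.
  have hAB : 0 < INR alpha * INR beta by nra.
  split; rewrite /L.
    rewrite /Rdiv; apply: Rmult_le_pos; first lra; left; apply: Rinv_0_lt_compat; lra.
  apply: (Rmult_le_reg_r (INR alpha * INR beta)) => //.
  rewrite /Rdiv Rmult_assoc Rinv_l; lra.
pose D m := rsum rho m - INR m * L.
have Dper : forall m, D (m + alpha)%N = D m.
  move=> m; rewrite /D plus_INR; have := @rsum_shift rho alpha per m; rewrite first; nra.
have Dbase : forall m, (m < alpha)%N -> Rabs (D m) <= INR alpha.
  move=> m hm; have := @rsum_bounds rho m rb.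
  have hmA : INR m <= INR alpha by apply: le_INR; apply/leP; lia.
  have hm0 : 0 <= INR m by apply: pos_INR.
  move=> hs; apply: Rabs_le; rewrite /D; nra.
have Dall : forall m, Rabs (D m) <= INR alpha.
  move=> m; rewrite (divn_eq m alpha); elim: (m %/ alpha)%N => [|t IH].
    rewrite mul0n add0n; apply: Dbase; exact: ltn_pmod.
  have -> : (t.+1 * alpha + m %% alpha)%N = (t * alpha + m %% alpha + alpha)%N.
    by rewrite mulSn; lia.
  by rewrite Dper.
rewrite /has_rate -/L => eps heps.
have [N [hN hN0]] := archimed_cor1 (eps / INR alpha) (Rdiv_lt_0_compat _ _ heps Apos).
exists N => m hm.
have hmN : INR N <= INR m by apply: le_INR.
have hN1 : 0 < INR N by apply: lt_0_INR.
have hm1 : 0 < INR m by lra.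
rewrite (@rsum_ext _ _ m Hrate) /Rdist.
have -> : rsum rho m / INR m - L = D m * / INR m by rewrite /D; field; lra.
rewrite Rabs_mult Rabs_inv (Rabs_pos_eq (INR m)); last lra.
have h1 : / INR m <= / INR N by apply: Rinv_le_contravar.
have h2 : INR alpha * / INR N < eps.
  have := Rmult_lt_compat_l _ _ _ Apos hN. rewrite /Rdiv.
  have : INR alpha * (eps * / INR alpha) = eps by field; lra.
  lra.
have h3 : 0 < / INR m by apply: Rinv_0_lt_compat.
have h4 := Dall m. have h5 := Rabs_pos (D m).
nra.
Qed.

Close Scope R_scope.

Theorem theorem3 (alpha beta p n : nat) (C : code n) :
  0 < alpha -> 0 < beta -> 0 < p -> 0 < n ->
  p < alpha * beta -> beta %| n ->
  is_thm3_code C alpha beta p ->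
  constrained C alpha beta p /\
  has_rate C (Rdiv (INR p) (Rmult (INR alpha) (INR beta))).
Proof.
move=> ha hb hp hn hpab _ HC; split.
  exact: part1 ha hb hp HC.
exact: part2 ha hb hp hpab HC.
Qed.
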